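(* Let $J\subseteq\mathbb{R}$ be an open interval and let $\gamma:J\to{\rm AdS}$ be a null curve satisfying the standing assumptions below, with bending $\kappa$ and spinor frame field $(F_+,F_-)$. Then the first column vectors $\eta_+$ of $F_+$ and $\eta_-$ of $F_-$ are star-shaped curves $J\to\dot{\mathbb{R}}^2$, parametrized by central affine arc length, with canonical central affine frame fields $F_+$ and $F_-$ and central affine curvatures $$\mathrm{k}_+=\kappa+1,\qquad \mathrm{k}_-=\kappa-1;$$ in particular $(\eta_+,\eta_-)$ is a pair of cousins. Conversely, let $(\eta_+,\eta_-)$ be a pair of cousins $J\to\dot{\mathbb{R}}^2$ with central affine curvatures $\mathrm{k}_\pm$ and canonical central affine frame fields $F_\pm=(\eta_\pm,\eta_\pm')$. Then $\gamma=F_+F_-^{-1}:J\to{\rm AdS}$ is a null curve, parametrized by proper time and without inflection points, with bending $\kappa=(\mathrm{k}_++\mathrm{k}_-)/2$ and with $(F_+,F_-)$ a spinor frame field along it.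
   Context: Let $\mathbb{R}^{2,2}$ be the space of real $2\times2$ matrices with the quadratic form $q(X)=-\det X$ and its polarization $\langle\cdot,\cdot\rangle$ (signature $(2,2)$). The anti-de Sitter 3-space ${\rm AdS}$ is ${\rm SL}(2,\mathbb{R})\subset\mathbb{R}^{2,2}$ with the induced Lorentzian metric. A smooth immersed curve $\gamma:J\to{\rm AdS}$ is null if $\langle\gamma',\gamma'\rangle=0$. Standing assumptions on null curves: $\gamma$ is future-directed (i.e. $\det\begin{pmatrix}\langle U,\gamma\rangle&\langle U,\gamma'\rangle\\ \langle V,\gamma\rangle&\langle V,\gamma'\rangle\end{pmatrix}>0$ with $U=I_2$, $V=\begin{pmatrix}0&1\\-1&0\end{pmatrix}$), has no inflection points ($\gamma'\wedge\gamma''\neq0$), and is parametrized by proper time, i.e. $\langle\gamma'',\gamma''\rangle=4$. The bending is $\kappa=-\frac1{16}\langle\gamma''',\gamma'''\rangle$. Put $T=\gamma'/\sqrt2$, $N=\gamma''/2$, $B=\frac{1}{\sqrt2}\kappa\gamma'-\frac{1}{2\sqrt2}\gamma'''$ and let $P_1=\begin{pmatrix}1&0\\0&1\end{pmatrix}$, $P_2=\begin{pmatrix}0&\sqrt2\\0&0\end{pmatrix}$, $P_3=\begin{pmatrix}-1&0\\0&1\end{pmatrix}$, $P_4=\begin{pmatrix}0&0\\\sqrt2&0\end{pmatrix}$. It is further assumed (normalization on orientation) that there is a smooth map $(F_+,F_-):J\to{\rm SL}(2,\mathbb{R})\times{\rm SL}(2,\mathbb{R})$ with $\gamma=F_+F_-^{-1}$,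 $T=F_+P_2F_-^{-1}$, $N=F_+P_3F_-^{-1}$, $B=F_+P_4F_-^{-1}$; this is called a spinor frame field along $\gamma$ (unique up to overall sign). Star-shaped curves: $\dot{\mathbb{R}}^2=\mathbb{R}^2\setminus\{0\}$. A smooth curve $\eta:J\to\dot{\mathbb{R}}^2$ is star-shaped if $\det(\eta,\eta')\neq0$; it is parametrized by central affine arc length if $\det(\eta,\eta')=1$; its central affine curvature is $\mathrm{k}=-\det(\eta',\eta'')$ and its canonical central affine frame field is the ${\rm SL}(2,\mathbb{R})$-valued map $F=(\eta,\eta')$ (columns $\eta,\eta'$). A pair of star-shaped curves $(\eta,\bar\eta)$ parametrized by central affine arc length is a pair of cousins if their curvatures satisfy $(\mathrm{k}-\bar{\mathrm{k}})/2=1$. *)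

(* Defs.v *)
From Stdlib Require Import Reals.
From Coquelicot Require Import Coquelicot.
Open Scope R_scope.

Record Mat2 := mkM { m11 : R; m12 : R; m21 : R; m22 : R }.

Definition mzero : Mat2 := mkM 0 0 0 0.
Definition madd (X Y : Mat2) : Mat2 :=
  mkM (m11 X + m11 Y) (m12 X + m12 Y) (m21 X + m21 Y) (m22 X + m22 Y).
Definition mscal (c : R) (X : Mat2) : Mat2 :=
  mkM (c * m11 X) (c * m12 X) (c * m21 X) (c * m22 X).
Definition mmul (X Y : Mat2) : Mat2 :=
  mkM (m11 X * m11 Y + m12 X * m21 Y) (m11 X * m12 Y + m12 X * m22 Y)
      (m21 X * m11 Y + m22 X * m21 Y) (m21 X * m12 Y + m22 X * m22 Y).
Definition mdet (X : Mat2) : R := m11 X * m22 X - m12 X * m21 X.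
Definition madj (X : Mat2) : Mat2 := mkM (m22 X) (- m12 X) (- m21 X) (m11 X).
Definition minv (X : Mat2) : Mat2 := mscal (/ mdet X) (madj X).

Definition qform (X : Mat2) : R := - mdet X.
Definition ip (X Y : Mat2) : R := (qform (madd X Y) - qform X - qform Y) / 2.

Definition Umat : Mat2 := mkM 1 0 0 1.
Definition Vmat : Mat2 := mkM 0 1 (-1) 0.
Definition P1 : Mat2 := mkM 1 0 0 1.
Definition P2 : Mat2 := mkM 0 (sqrt 2) 0 0.
Definition P3 : Mat2 := mkM (-1) 0 0 1.
Definition P4 : Mat2 := mkM 0 0 (sqrt 2) 0.

Definition in_AdS (X : Mat2) : Prop := mdet X = 1.

Definition in_interval (a b : Rbar) (t : R) : Prop := Rbar_lt a t /\ Rbar_lt t b.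

Definition smooth_on (J : R -> Prop) (f : R -> R) : Prop :=
  forall (n : nat) (t : R), J t -> ex_derive_n f n t.

Definition msmooth_on (J : R -> Prop) (g : R -> Mat2) : Prop :=
  smooth_on J (fun s => m11 (g s)) /\ smooth_on J (fun s => m12 (g s)) /\
  smooth_on J (fun s => m21 (g s)) /\ smooth_on J (fun s => m22 (g s)).

Definition md (g : R -> Mat2) : R -> Mat2 := fun t =>
  mkM (Derive (fun s => m11 (g s)) t) (Derive (fun s => m12 (g s)) t)
      (Derive (fun s => m21 (g s)) t) (Derive (fun s => m22 (g s)) t).

Definition null_curve (J : R -> Prop) (g : R -> Mat2) : Prop :=
  msmooth_on J g /\
  forall t, J t -> in_AdS (g t) /\ md g t <> mzero /\ ip (md g t) (md g t) = 0.

Definition future_directed (J : R -> Prop) (g : R -> Mat2) : Prop :=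
  forall t, J t ->
    ip Umat (g t) * ip Vmat (md g t) - ip Umat (md g t) * ip Vmat (g t) > 0.

(** gamma' /\ gamma'' <> 0, i.e. gamma', gamma'' linearly independent *)
Definition no_inflection (J : R -> Prop) (g : R -> Mat2) : Prop :=
  forall t, J t -> forall x y : R,
    madd (mscal x (md g t)) (mscal y (md (md g) t)) = mzero -> x = 0 /\ y = 0.

Definition proper_time (J : R -> Prop) (g : R -> Mat2) : Prop :=
  forall t, J t -> ip (md (md g) t) (md (md g) t) = 4.

Definition std_null_curve (J : R -> Prop) (g : R -> Mat2) : Prop :=
  null_curve J g /\ future_directed J g /\ no_inflection J g /\ proper_time J g.

Definition bending (g : R -> Mat2) (t : R) : R :=
  - (1 / 16) * ip (md (md (md g)) t) (md (md (md g)) t).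

Definition Tvec (g : R -> Mat2) (t : R) : Mat2 := mscal (/ sqrt 2) (md g t).
Definition Nvec (g : R -> Mat2) (t : R) : Mat2 := mscal (/ 2) (md (md g) t).
Definition Bvec (g : R -> Mat2) (t : R) : Mat2 :=
  madd (mscal (/ sqrt 2 * bending g t) (md g t))
       (mscal (- / (2 * sqrt 2)) (md (md (md g)) t)).

Definition spinor_frame (J : R -> Prop) (g Fp Fm : R -> Mat2) : Prop :=
  msmooth_on J Fp /\ msmooth_on J Fm /\
  forall t, J t ->
    in_AdS (Fp t) /\ in_AdS (Fm t) /\
    g t = mmul (Fp t) (minv (Fm t)) /\
    Tvec g t = mmul (mmul (Fp t) P2) (minv (Fm t)) /\
    Nvec g t = mmul (mmul (Fp t) P3) (minv (Fm t)) /\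
    Bvec g t = mmul (mmul (Fp t) P4) (minv (Fm t)).

Definition vdet (u v : R * R) : R := fst u * snd v - snd u * fst v.

Definition vd (eta : R -> R * R) : R -> R * R := fun t =>
  (Derive (fun s => fst (eta s)) t, Derive (fun s => snd (eta s)) t).

Definition vsmooth_on (J : R -> Prop) (eta : R -> R * R) : Prop :=
  smooth_on J (fun s => fst (eta s)) /\ smooth_on J (fun s => snd (eta s)).

Definition star_shaped (J : R -> Prop) (eta : R -> R * R) : Prop :=
  vsmooth_on J eta /\
  forall t, J t -> eta t <> (0, 0) /\ vdet (eta t) (vd eta t) <> 0.

Definition ca_arclength (J : R -> Prop) (eta : R -> R * R) : Prop :=
  forall t, J t -> vdet (eta t) (vd eta t) = 1.

Definition ca_curv (eta : R -> R * R) (t : R) : R :=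
  - vdet (vd eta t) (vd (vd eta) t).

Definition ca_frame (eta : R -> R * R) (t : R) : Mat2 :=
  mkM (fst (eta t)) (fst (vd eta t)) (snd (eta t)) (snd (vd eta t)).

Definition col1 (F : Mat2) : R * R := (m11 F, m21 F).

Definition cousins (J : R -> Prop) (eta etab : R -> R * R) : Prop :=
  star_shaped J eta /\ star_shaped J etab /\
  ca_arclength J eta /\ ca_arclength J etab /\
  forall t, J t -> (ca_curv eta t - ca_curv etab t) / 2 = 1.

(* Main.v *)
Require Import Defs.
From Stdlib Require Import Reals Lra Lia Psatz.
From Coquelicot Require Import Coquelicot.
Open Scope R_scope.

Definition isopen (J : R -> Prop) := forall t, J t -> locally t J.

Lemma interval_open (a b : Rbar) : isopen (in_interval a b).
Proof.
  intros t Ht. apply (@open_and R_UniformSpace (fun u : R => Rbar_lt a u) (fun u : R => Rbar_lt u b)).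
  - apply open_Rbar_gt. - apply open_Rbar_lt. - exact Ht.
Qed.

Lemma loc_eq (J : R -> Prop) (HJ : isopen J) (f g : R -> R) t :
  (forall s, J s -> f s = g s) -> J t -> locally t (fun s => f s = g s).
Proof. intros H Ht. apply (filter_imp J); [exact H| exact (HJ t Ht)]. Qed.

Lemma smooth_ext J (HJ : isopen J) f g :
  (forall s, J s -> f s = g s) -> smooth_on J f -> smooth_on J g.
Proof.
  intros H Hf n t Ht. apply (ex_derive_n_ext_loc f g). apply (loc_eq J HJ); auto. auto.
Qed.

Lemma Derive_n_Derive f m y : Derive_n (Derive f) m y = Derive_n f (S m) y.
Proof. rewrite <- Nat.add_1_r. exact (Derive_n_comp f m 1 y). Qed.

Lemma smooth_Derive J f : smooth_on J f -> smooth_on J (Derive f).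
Proof.
  intros H [|m] t Ht; simpl; auto.
  apply (ex_derive_ext (Derive_n f (S m))).
  - intros y. symmetry. apply Derive_n_Derive.
  - exact (H (S (S m)) t Ht).
Qed.

Lemma smooth_ex J f t : smooth_on J f -> J t -> ex_derive f t.
Proof. intros H Ht. exact (H 1%nat t Ht). Qed.

Lemma smooth_const J c : smooth_on J (fun _ => c).
Proof.
  intros [|n] t Ht; simpl; auto.
  destruct n; simpl. apply ex_derive_const.
  apply (ex_derive_ext (fun _ => 0)).
  - intros y. symmetry. exact (Derive_n_const n c y).
  - apply ex_derive_const.
Qed.

Lemma smooth_plus J (HJ : isopen J) f g :
  smooth_on J f -> smooth_on J g -> smooth_on J (fun s => f s + g s).
Proof.
  intros Hf Hg n t Ht. apply ex_derive_n_plus.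
  - apply (filter_imp J); [|exact (HJ t Ht)]. intros y Hy k _. auto.
  - apply (filter_imp J); [|exact (HJ t Ht)]. intros y Hy k _. auto.
Qed.

Lemma smooth_mult J (HJ : isopen J) f g :
  smooth_on J f -> smooth_on J g -> smooth_on J (fun s => f s * g s).
Proof.
  intros Hf Hg n. revert f g Hf Hg.
  induction n as [n IH] using (well_founded_induction Wf_nat.lt_wf).
  intros f g Hf Hg t Ht.
  destruct n as [|[|m]]; simpl; auto.
  - apply ex_derive_mult; eapply smooth_ex; eauto.
  - change (ex_derive_n (fun x => f x * g x) (S (S m)) t).
    assert (E : ex_derive_n (Derive (fun x => f x * g x)) (S m) t).
    { apply (ex_derive_n_ext_loc (fun s => Derive f s * g s + f s * Derive g s)).
      - apply (loc_eq J HJ); auto. intros s Hs. symmetry. apply Derive_mult; eapply smooth_ex; eauto.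
      - apply ex_derive_n_plus.
        + apply (filter_imp J); [|exact (HJ t Ht)]. intros y Hy k Hk.
          apply (IH k); [lia| apply smooth_Derive; auto | auto | auto].
        + apply (filter_imp J); [|exact (HJ t Ht)]. intros y Hy k Hk.
          apply (IH k); [lia| auto | apply smooth_Derive; auto | auto]. }
    simpl in E. simpl.
    apply (ex_derive_ext (Derive_n (Derive (fun x => f x * g x)) m)).
    + intros y. apply Derive_n_Derive.
    + exact E.
Qed.

Lemma smooth_scal J (HJ : isopen J) c f : smooth_on J f -> smooth_on J (fun s => c * f s).
Proof. intros. apply smooth_mult; auto. apply smooth_const. Qed.

Lemma smooth_opp J (HJ : isopen J) f : smooth_on J f -> smooth_on J (fun s => - f s).
Proof. intros H. apply (smooth_ext J HJ (fun s => -1 * f s)). intros; ring. apply smooth_scal; auto. Qed.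

Lemma mat_eq X Y : m11 X = m11 Y -> m12 X = m12 Y -> m21 X = m21 Y -> m22 X = m22 Y -> X = Y.
Proof. destruct X, Y; simpl; intros; subst; reflexivity. Qed.

Ltac mring := apply mat_eq; simpl; ring.

Definition Xs (P Q C : Mat2) := mmul (mmul P C) (madj Q).
Definition Ds (P Q P' Q' C : Mat2) :=
  madd (mmul (mmul P' C) (madj Q)) (mmul (mmul P C) (madj Q')).

Definition mdiff (F : R -> Mat2) t :=
  ex_derive (fun s => m11 (F s)) t /\ ex_derive (fun s => m12 (F s)) t /\
  ex_derive (fun s => m21 (F s)) t /\ ex_derive (fun s => m22 (F s)) t.

Lemma mdiff_mmul F G t : mdiff F t -> mdiff G t -> mdiff (fun s => mmul (F s) (G s)) t.
Proof.
  intros (f1&f2&f3&f4) (g1&g2&g3&g4); unfold mmul; cbn [m11 m12 m21 m22].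
  repeat split; apply (ex_derive_plus (V := R_NormedModule)); apply ex_derive_mult; auto.
Qed.

Lemma mdiff_madj F t : mdiff F t -> mdiff (fun s => madj (F s)) t.
Proof.
  intros (f1&f2&f3&f4); unfold madj; cbn [m11 m12 m21 m22].
  repeat split; auto; apply (ex_derive_opp (V := R_NormedModule)); auto.
Qed.

Lemma mdiff_const C t : mdiff (fun _ => C) t.
Proof. repeat split; apply ex_derive_const. Qed.

Lemma md_mmul F G t : mdiff F t -> mdiff G t ->
  md (fun s => mmul (F s) (G s)) t = madd (mmul (md F t) (G t)) (mmul (F t) (md G t)).
Proof.
  intros (f1&f2&f3&f4) (g1&g2&g3&g4). unfold md, mmul, madd; cbn [m11 m12 m21 m22].
  f_equal; rewrite Derive_plus by (apply ex_derive_mult; auto);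
    rewrite !Derive_mult by auto; ring.
Qed.

Lemma md_madj F t : md (fun s => madj (F s)) t = madj (md F t).
Proof.
  unfold md, madj; cbn [m11 m12 m21 m22]. f_equal; apply Derive_opp.
Qed.

Lemma md_mscal c F t : md (fun s => mscal c (F s)) t = mscal c (md F t).
Proof. unfold md, mscal; cbn [m11 m12 m21 m22]. f_equal; apply Derive_scal. Qed.

Lemma md_const C t : md (fun _ => C) t = mzero.
Proof. unfold md, mzero. f_equal; apply Derive_const. Qed.

Lemma md_ext J (HJ : isopen J) F G t : (forall s, J s -> F s = G s) -> J t -> md F t = md G t.
Proof.
  intros H Ht. unfold md. f_equal; apply Derive_ext_loc; apply (loc_eq J HJ); auto;
  intros s Hs; simpl; rewrite (H s Hs); auto.
Qed.

Lemma md_sandwich F G C t : mdiff F t -> mdiff G t ->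
  md (fun s => Xs (F s) (G s) C) t = Ds (F t) (G t) (md F t) (md G t) C.
Proof.
  intros HF HG. unfold Xs.
  rewrite (md_mmul (fun s => mmul (F s) C) (fun s => madj (G s))).
  2: apply mdiff_mmul; auto; apply mdiff_const.
  2: apply mdiff_madj; auto.
  rewrite (md_mmul F (fun _ => C)) by (auto; apply mdiff_const).
  rewrite md_const, md_madj. unfold Ds. mring.
Qed.

Lemma msmooth_mdiff J F t : msmooth_on J F -> J t -> mdiff F t.
Proof. intros (h1&h2&h3&h4) Ht. repeat split; eapply smooth_ex; eauto. Qed.

Lemma msmooth_md J F : msmooth_on J F -> msmooth_on J (md F).
Proof. intros (h1&h2&h3&h4). repeat split; apply smooth_Derive; auto. Qed.

Lemma msmooth_ext J (HJ : isopen J) F G : (forall s, J s -> F s = G s) -> msmooth_on J F -> msmooth_on J G.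
Proof.
  intros H (h1&h2&h3&h4). repeat split.
  - eapply smooth_ext; [exact HJ| |exact h1]. intros s Hs; simpl; rewrite (H s Hs); auto.
  - eapply smooth_ext; [exact HJ| |exact h2]. intros s Hs; simpl; rewrite (H s Hs); auto.
  - eapply smooth_ext; [exact HJ| |exact h3]. intros s Hs; simpl; rewrite (H s Hs); auto.
  - eapply smooth_ext; [exact HJ| |exact h4]. intros s Hs; simpl; rewrite (H s Hs); auto.
Qed.

Lemma msmooth_mmul J (HJ : isopen J) F G : msmooth_on J F -> msmooth_on J G ->
  msmooth_on J (fun s => mmul (F s) (G s)).
Proof.
  intros (f1&f2&f3&f4) (g1&g2&g3&g4). unfold mmul; cbn [m11 m12 m21 m22].
  repeat split; apply smooth_plus; auto; apply smooth_mult; auto.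
Qed.

Lemma msmooth_madj J (HJ : isopen J) F : msmooth_on J F -> msmooth_on J (fun s => madj (F s)).
Proof.
  intros (f1&f2&f3&f4). unfold madj; cbn [m11 m12 m21 m22].
  repeat split; auto; apply smooth_opp; auto.
Qed.

Lemma minv_adj X : mdet X = 1 -> minv X = madj X.
Proof. intros H. unfold minv. rewrite H, Rinv_1. mring. Qed.

Lemma mdet_mmul X Y : mdet (mmul X Y) = mdet X * mdet Y.
Proof. destruct X, Y; unfold mdet, mmul; simpl; ring. Qed.

Lemma mdet_madj X : mdet (madj X) = mdet X.
Proof. destruct X; unfold mdet, madj; simpl; ring. Qed.

Lemma ip_self X : ip X X = - mdet X.
Proof. destruct X; unfold ip, qform, mdet, madd; simpl; field. Qed.

Lemma Xs_inj P Q C D : mdet P = 1 -> mdet Q = 1 -> Xs P Q C = Xs P Q D -> C = D.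
Proof.
  intros HP HQ H.
  assert (E : forall C, mmul (mmul (madj P) (Xs P Q C)) Q = mscal (mdet P * mdet Q) C).
  { intros C0. destruct P, Q, C0; unfold mdet; mring. }
  pose proof (f_equal (fun X => mmul (mmul (madj P) X) Q) H) as H2. simpl in H2.
  rewrite !E, HP, HQ in H2. destruct C, D; unfold mscal in H2; simpl in H2.
  injection H2; intros; apply mat_eq; simpl; lra.
Qed.

Lemma Ds_A P Q A B C : Ds P Q (mmul P A) (mmul Q B) C = Xs P Q (madd (mmul A C) (mmul C (madj B))).
Proof. destruct P, Q, A, B, C; unfold Ds, Xs; mring. Qed.

Lemma Xs_scal c P Q C : mscal c (Xs P Q C) = Xs P Q (mscal c C).
Proof. destruct P, Q, C; unfold Xs; mring. Qed.

Lemma Xs_add P Q C D : madd (Xs P Q C) (Xs P Q D) = Xs P Q (madd C D).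
Proof. destruct P, Q, C, D; unfold Xs; mring. Qed.

Lemma sqrt2_sq : sqrt 2 * sqrt 2 = 2.
Proof. apply sqrt_sqrt; lra. Qed.
Lemma sqrt2_pos : 0 < sqrt 2.
Proof. apply sqrt_lt_R0; lra. Qed.

Lemma fwd_alg A B k :
  madd (mmul A Umat) (mmul Umat (madj B)) = mscal (sqrt 2) P2 ->
  mscal (/2) (mscal (sqrt 2) (madd (mmul A P2) (mmul P2 (madj B)))) = P3 ->
  madd (mscal (/ sqrt 2 * k) (mscal (sqrt 2) P2))
       (mscal (- / (2 * sqrt 2)) (mscal 2 (madd (mmul A P3) (mmul P3 (madj B))))) = P4 ->
  m11 A + m22 A = 0 -> m11 B + m22 B = 0 ->
  A = mkM 0 (k+1) 1 0 /\ B = mkM 0 (k-1) 1 0.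
Proof.
  pose proof sqrt2_sq as Hs. pose proof sqrt2_pos as Hp.
  destruct A as [a1 a2 a3 a4], B as [b1 b2 b3 b4].
  unfold madd, mmul, mscal, madj, Umat, P2, P3, P4; simpl.
  set (r := sqrt 2) in *.
  intros H1 H2 H3 T1 T2.
  injection H1; injection H2; injection H3; clear H1 H2 H3; intros.
  assert (b3 = 1) by nra. assert (a3 = 1) by nra.
  assert (a1 + b1 = 0) by nra.
  assert (a1 = 0) by nra. assert (b1 = 0) by nra.
  assert (a4 = 0) by nra. assert (b4 = 0) by nra.
  assert (Hr : / (2 * r) * 2 = / r) by (field; lra).
  assert (a2 = k + 1).
  { assert (Hq : k * r - / r * (a2 + b2) = 0).
    { rewrite <- H1. field. lra. }
    assert (Hq2 : r * (k * r - / r * (a2 + b2)) = 0) by (rewrite Hq; ring).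
    replace (r * (k * r - / r * (a2 + b2))) with (k * (r * r) - (a2 + b2)) in Hq2 by (field; lra).
    rewrite Hs in Hq2. lra. }
  split; f_equal; nra.
Qed.

Lemma mscal_inv c X : c <> 0 -> mscal c (mscal (/ c) X) = X.
Proof. intros H. destruct X; unfold mscal; apply mat_eq; simpl; field; auto. Qed.

Lemma P_A P X : mdet P = 1 -> mmul P (mmul (madj P) X) = X.
Proof.
  intros H. assert (E : mmul P (mmul (madj P) X) = mscal (mdet P) X)
    by (destruct P, X; unfold mdet; mring).
  rewrite E, H. destruct X; unfold mscal; mring.
Qed.

Lemma adjP_P P : mdet P = 1 -> mmul (madj P) P = Umat.
Proof.
  intros H. destruct P; unfold mdet in H; simpl in H. unfold Umat; apply mat_eq; simpl; lra.
Qed.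

Lemma tr_lemma P A : mdet P = 1 ->
  madd (mmul (madj (mmul P A)) P) A = mzero -> m11 A + m22 A = 0.
Proof.
  intros H H0.
  assert (E : madd (mmul (madj (mmul P A)) P) A = madd (mscal (mdet P) (madj A)) A)
    by (destruct P, A; unfold mdet; mring).
  rewrite E, H in H0. apply (f_equal m11) in H0. destruct A; simpl in *. lra.
Qed.

Lemma Xs_one P Q : mdet Q = 1 -> mmul P (minv Q) = Xs P Q Umat.
Proof. intros H. rewrite minv_adj by auto. destruct P, Q; unfold Xs; mring. Qed.

Lemma Xs_minv P Q C : mdet Q = 1 -> mmul (mmul P C) (minv Q) = Xs P Q C.
Proof. intros H. rewrite minv_adj by auto. reflexivity. Qed.

Lemma fwd_frame J (HJ : isopen J) g Fp Fm :
  std_null_curve J g -> spinor_frame J g Fp Fm -> forall t, J t ->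
  md Fp t = mmul (Fp t) (mkM 0 (bending g t + 1) 1 0) /\
  md Fm t = mmul (Fm t) (mkM 0 (bending g t - 1) 1 0).
Proof.
  intros [[Hgs _] _] [HPs [HQs HF]] t Ht.
  assert (S0 : forall s, J s -> g s = Xs (Fp s) (Fm s) Umat).
  { intros s Hs. destruct (HF s Hs) as (_&HQ&E&_). rewrite E. apply Xs_one; auto. }
  assert (S1' : forall s, J s -> md g s = mscal (sqrt 2) (Xs (Fp s) (Fm s) P2)).
  { intros s Hs. destruct (HF s Hs) as (_&HQ&_&E&_). rewrite <- Xs_minv by auto.
    rewrite <- E. unfold Tvec. rewrite mscal_inv; try reflexivity. pose proof sqrt2_pos; lra. }
  assert (S2' : forall s, J s -> md (md g) s = mscal 2 (Xs (Fp s) (Fm s) P3)).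
  { intros s Hs. destruct (HF s Hs) as (_&HQ&_&_&E&_). rewrite <- Xs_minv by auto.
    rewrite <- E. unfold Nvec. rewrite mscal_inv; try reflexivity. lra. }
  pose proof (msmooth_mdiff J Fp t HPs Ht) as DP.
  pose proof (msmooth_mdiff J Fm t HQs Ht) as DQ.
  assert (S1 : md g t = Ds (Fp t) (Fm t) (md Fp t) (md Fm t) Umat).
  { rewrite (md_ext J HJ g (fun s => Xs (Fp s) (Fm s) Umat) t S0 Ht). apply md_sandwich; auto. }
  assert (S2 : md (md g) t = mscal (sqrt 2) (Ds (Fp t) (Fm t) (md Fp t) (md Fm t) P2)).
  { rewrite (md_ext J HJ (md g) (fun s => mscal (sqrt 2) (Xs (Fp s) (Fm s) P2)) t S1' Ht).
    rewrite md_mscal. f_equal. apply md_sandwich; auto. }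
  assert (S3 : md (md (md g)) t = mscal 2 (Ds (Fp t) (Fm t) (md Fp t) (md Fm t) P3)).
  { rewrite (md_ext J HJ (md (md g)) (fun s => mscal 2 (Xs (Fp s) (Fm s) P3)) t S2' Ht).
    rewrite md_mscal. f_equal. apply md_sandwich; auto. }
  destruct (HF t Ht) as (HP&HQ&_&ET&EN&EB).
  unfold in_AdS in HP, HQ.
  assert (TP : madd (mmul (madj (md Fp t)) (Fp t)) (mmul (madj (Fp t)) (md Fp t)) = mzero).
  { rewrite <- (md_const Umat t). rewrite <- md_madj.
    rewrite <- (md_mmul (fun s => madj (Fp s)) Fp t) by (auto; apply mdiff_madj; auto).
    apply md_ext with (J := J); auto. intros s Hs. destruct (HF s Hs) as (H1&_).
    apply adjP_P; auto. }
  assert (TQ : madd (mmul (madj (md Fm t)) (Fm t)) (mmul (madj (Fm t)) (md Fm t)) = mzero).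
  { rewrite <- (md_const Umat t). rewrite <- md_madj.
    rewrite <- (md_mmul (fun s => madj (Fm s)) Fm t) by (auto; apply mdiff_madj; auto).
    apply md_ext with (J := J); auto. intros s Hs. destruct (HF s Hs) as (_&H1&_).
    apply adjP_P; auto. }
  unfold Tvec in ET. unfold Nvec in EN. unfold Bvec in EB.
  rewrite Xs_minv in EB by auto.
  rewrite S3, (S1' t Ht) in EB.
  rewrite S2 in EN. rewrite Xs_minv in EN by auto.
  rewrite S1 in ET. rewrite Xs_minv in ET by auto.
  set (k := bending g t) in *.
  remember (mmul (madj (Fp t)) (md Fp t)) as A eqn:HA.
  remember (mmul (madj (Fm t)) (md Fm t)) as B eqn:HB.
  assert (HPA : md Fp t = mmul (Fp t) A) by (rewrite HA, P_A; auto).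
  assert (HQB : md Fm t = mmul (Fm t) B) by (rewrite HB, P_A; auto).
  rewrite HPA in ET, EN, EB, TP. rewrite HQB in ET, EN, EB, TQ.
  rewrite !Ds_A in ET, EN, EB.
  repeat rewrite Xs_scal in ET. repeat rewrite Xs_scal in EN. repeat rewrite Xs_scal in EB.
  rewrite Xs_add in EB.
  apply tr_lemma in TP; auto. apply tr_lemma in TQ; auto.
  apply Xs_inj in ET; auto. apply Xs_inj in EN; auto. apply Xs_inj in EB; auto.
  apply (f_equal (mscal (sqrt 2))) in ET. rewrite mscal_inv in ET by (pose proof sqrt2_pos; lra).
  destruct (fwd_alg A B k ET EN EB TP TQ) as [-> ->].
  split; auto.
Qed.


Lemma frame_curve J (HJ : isopen J) F k : msmooth_on J F ->
  (forall s, J s -> mdet (F s) = 1) ->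
  (forall s, J s -> md F s = mmul (F s) (mkM 0 (k s) 1 0)) ->
  star_shaped J (fun s => col1 (F s)) /\ ca_arclength J (fun s => col1 (F s)) /\
  (forall t, J t -> ca_frame (fun s => col1 (F s)) t = F t /\
                    ca_curv (fun s => col1 (F s)) t = k t).
Proof.
  intros HS Hd Hm.
  assert (V1 : forall s, J s -> vd (fun s => col1 (F s)) s = (m12 (F s), m22 (F s))).
  { intros s Hs. unfold vd, col1; simpl.
    transitivity (m11 (md F s), m21 (md F s)); [reflexivity|].
    rewrite (Hm s Hs). simpl. f_equal; ring. }
  assert (V2 : forall s, J s -> vd (vd (fun s => col1 (F s))) s = (k s * m11 (F s), k s * m21 (F s))).
  { intros s Hs. unfold vd at 1.
    rewrite (Derive_ext_loc (fun s0 => fst (vd (fun s1 => col1 (F s1)) s0)) (fun s0 => m12 (F s0))).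
    2:{ apply (loc_eq J HJ); auto. intros s0 Hs0. rewrite V1; auto. }
    rewrite (Derive_ext_loc (fun s0 => snd (vd (fun s1 => col1 (F s1)) s0)) (fun s0 => m22 (F s0))).
    2:{ apply (loc_eq J HJ); auto. intros s0 Hs0. rewrite V1; auto. }
    transitivity (m12 (md F s), m22 (md F s)); [reflexivity|].
    rewrite (Hm s Hs). simpl. f_equal; ring. }
  destruct HS as (h1&h2&h3&h4).
  split; [|split].
  - split. split; [exact h1|exact h3].
    intros t Ht. rewrite V1 by auto. pose proof (Hd t Ht) as D. unfold mdet in D.
    unfold col1, vdet; simpl. split.
    + intros E; injection E; intros; nra.
    + nra.
  - intros t Ht. rewrite V1 by auto. pose proof (Hd t Ht) as D. unfold mdet in D.
    unfold col1, vdet; simpl. lra.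
  - intros t Ht. split.
    + unfold ca_frame. rewrite V1 by auto. apply mat_eq; reflexivity.
    + unfold ca_curv. rewrite V1, V2 by auto. pose proof (Hd t Ht) as D. unfold mdet in D.
      unfold vdet; simpl. transitivity (k t * (m11 (F t) * m22 (F t) - m12 (F t) * m21 (F t))); [ring|].
      rewrite D; ring.
Qed.

Lemma ca_props J (HJ : isopen J) eta : star_shaped J eta -> ca_arclength J eta ->
  msmooth_on J (ca_frame eta) /\ (forall s, J s -> mdet (ca_frame eta s) = 1) /\
  (forall s, J s -> md (ca_frame eta) s = mmul (ca_frame eta s) (mkM 0 (ca_curv eta s) 1 0)).
Proof.
  intros [[h1 h2] _] Ha.
  set (f1 := fun s => fst (eta s)). set (f2 := fun s => snd (eta s)).
  assert (D1 : smooth_on J (Derive f1)) by (apply smooth_Derive; auto).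
  assert (D2 : smooth_on J (Derive f2)) by (apply smooth_Derive; auto).
  assert (DD1 : smooth_on J (Derive (Derive f1))) by (apply smooth_Derive; auto).
  split; [|split].
  - repeat split; auto.
  - intros s Hs. rewrite <- (Ha s Hs). unfold mdet, vdet, ca_frame; simpl. ring.
  - intros s Hs.
    assert (Z : Derive (fun x => f1 x * Derive f2 x - f2 x * Derive f1 x) s = 0).
    { assert (L : locally s (fun x => f1 x * Derive f2 x - f2 x * Derive f1 x = 1)).
      { apply (loc_eq J HJ (fun x => f1 x * Derive f2 x - f2 x * Derive f1 x) (fun _ => 1)); auto. }
      transitivity (Derive (fun _ => 1) s); [apply Derive_ext_loc; exact L | apply Derive_const]. }
    rewrite Derive_minus in Z by (apply ex_derive_mult; eapply smooth_ex; eauto).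
    rewrite !Derive_mult in Z by (eapply smooth_ex; eauto).
    pose proof (Ha s Hs) as A. unfold vdet, vd in A. simpl in A. fold f1 f2 in A.
    change (md (ca_frame eta) s) with
      (mkM (Derive f1 s) (Derive (Derive f1) s) (Derive f2 s) (Derive (Derive f2) s)).
    unfold ca_curv, vdet, ca_frame, vd, mmul; simpl. fold f1 f2.
    change (Derive (fun s0 => Derive f1 s0) s) with (Derive (Derive f1) s).
    change (Derive (fun s0 => Derive f2 s0) s) with (Derive (Derive f2) s).
    set (a := f1 s) in *. set (b := f2 s) in *. set (a1 := Derive f1 s) in *.
    set (b1 := Derive f2 s) in *. set (a2 := Derive (Derive f1) s) in *.
    set (b2 := Derive (Derive f2) s) in *.
    change (fst (eta s)) with a in *. change (snd (eta s)) with b in *.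
    apply mat_eq; simpl.
    + ring.
    + apply Rminus_diag_uniq.
      transitivity (a2 * (1 - (a*b1 - b*a1)) + a1 * (a1*b1 + a*b2 - (b1*a1 + b*a2))); [ring|].
      rewrite A, Z. ring.
    + ring.
    + apply Rminus_diag_uniq.
      transitivity (b2 * (1 - (a*b1 - b*a1)) + b1 * (a1*b1 + a*b2 - (b1*a1 + b*a2))); [ring|].
      rewrite A, Z. ring.
Qed.

Lemma mdet_Xs P Q C : mdet (Xs P Q C) = mdet P * mdet C * mdet Q.
Proof. unfold Xs. rewrite !mdet_mmul, mdet_madj. ring. Qed.

Lemma fut_ineq P Q : mdet P = 1 -> mdet Q = 1 ->
  ip Umat (Xs P Q Umat) * ip Vmat (Xs P Q (mkM 0 2 0 0))
  - ip Umat (Xs P Q (mkM 0 2 0 0)) * ip Vmat (Xs P Q Umat) > 0.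
Proof.
  intros HP HQ.
  set (u := m21 Q). set (v := - m11 Q).
  set (N := mkM (2*u*v) (2*v*v) (-2*u*u) (-2*u*v)).
  assert (E : Xs P Q (mkM 0 2 0 0) = mmul (Xs P Q Umat) N).
  { assert (E2 : mmul (Xs P Q Umat) N = mscal (mdet Q) (Xs P Q (mkM 0 2 0 0))).
    { unfold N, u, v. destruct P, Q; unfold mdet; mring. }
    rewrite E2, HQ. destruct (Xs P Q (mkM 0 2 0 0)); unfold mscal; mring. }
  assert (Hd : mdet (Xs P Q Umat) = 1).
  { rewrite mdet_Xs, HP, HQ. unfold mdet, Umat; simpl; ring. }
  assert (Huv : u * u + v * v > 0).
  { unfold u, v. destruct Q as [q1 q2 q3 q4]; unfold mdet in HQ; simpl in *.
    destruct (Req_dec q1 0); destruct (Req_dec q3 0); nra. }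


  rewrite E. unfold N. clearbody u v. destruct (Xs P Q Umat) as [a b c d].
  unfold mdet in Hd; simpl in Hd.
  assert (F : ip Umat (mkM a b c d) * ip Vmat (mmul (mkM a b c d) (mkM (2*u*v) (2*v*v) (-2*u*u) (-2*u*v)))
    - ip Umat (mmul (mkM a b c d) (mkM (2*u*v) (2*v*v) (-2*u*u) (-2*u*v))) * ip Vmat (mkM a b c d)
    = / 2 * ((a*v - b*u)^2 + (c*v - d*u)^2 + (a*d - b*c) * (u*u + v*v))).
  { unfold ip, qform, mdet, madd, mmul, Umat, Vmat; simpl. field. }
  rewrite F, Hd. apply Rmult_gt_0_compat; [lra|]. pose proof (pow2_ge_0 (a*v-b*u)). pose proof (pow2_ge_0 (c*v-d*u)). nra.
Qed.

Lemma inv_s2 : / sqrt 2 = sqrt 2 / 2.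
Proof.
  pose proof sqrt2_sq. pose proof sqrt2_pos.
  replace (sqrt 2 / 2) with (sqrt 2 / (sqrt 2 * sqrt 2)) by (rewrite H; reflexivity).
  field; lra.
Qed.

Lemma Xs_zero P Q : Xs P Q mzero = mzero.
Proof. destruct P, Q; unfold Xs; mring. Qed.

Lemma conv_main J (HJ : isopen J) etap etam : cousins J etap etam ->
  std_null_curve J (fun t => mmul (ca_frame etap t) (minv (ca_frame etam t))) /\
  (forall t, J t ->
     bending (fun s => mmul (ca_frame etap s) (minv (ca_frame etam s))) t
     = (ca_curv etap t + ca_curv etam t) / 2) /\
  spinor_frame J (fun t => mmul (ca_frame etap t) (minv (ca_frame etam t)))
    (ca_frame etap) (ca_frame etam).
Proof.
  intros (Sp & Sm & Ap & Am & Hk).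
  destruct (ca_props J HJ etap Sp Ap) as (HPs & HPd & HPm).
  destruct (ca_props J HJ etam Sm Am) as (HQs & HQd & HQm).
  set (P := ca_frame etap) in *. set (Q := ca_frame etam) in *.
  set (kp := ca_curv etap) in *. set (km := ca_curv etam) in *.
  set (g := fun t => mmul (P t) (minv (Q t))).
  assert (DX : forall C s, J s -> md (fun u => Xs (P u) (Q u) C) s =
     Xs (P s) (Q s) (madd (mmul (mkM 0 (kp s) 1 0) C) (mmul C (madj (mkM 0 (km s) 1 0))))).
  { intros C s Hs. rewrite md_sandwich by (eapply msmooth_mdiff; eauto).
    rewrite HPm, HQm by auto. apply Ds_A. }
  assert (G0 : forall s, J s -> g s = Xs (P s) (Q s) Umat).
  { intros s Hs. unfold g. apply Xs_one. auto. }
  assert (G1 : forall s, J s -> md g s = Xs (P s) (Q s) (mkM 0 2 0 0)).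
  { intros s Hs. rewrite (md_ext J HJ g _ s G0 Hs), DX by auto. f_equal.
    pose proof (Hk s Hs). apply mat_eq; simpl; lra. }
  assert (G2 : forall s, J s -> md (md g) s = Xs (P s) (Q s) (mkM (-2) 0 0 2)).
  { intros s Hs. rewrite (md_ext J HJ (md g) _ s G1 Hs), DX by auto. f_equal.
    apply mat_eq; simpl; lra. }
  assert (G3 : forall s, J s -> md (md (md g)) s =
              Xs (P s) (Q s) (mkM 0 (2 * (kp s + km s)) (-4) 0)).
  { intros s Hs. rewrite (md_ext J HJ (md (md g)) _ s G2 Hs), DX by auto. f_equal.
    apply mat_eq; simpl; lra. }
  assert (BE : forall t, J t -> bending g t = (kp t + km t) / 2).
  { intros t Ht. unfold bending. rewrite G3, ip_self, mdet_Xs, HPd, HQd by auto.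
    unfold mdet; simpl. field. }
  pose proof sqrt2_sq as S2. pose proof sqrt2_pos as S2p.
  split; [|split].
  - split; [split|split; [|split]].
    + apply (msmooth_ext J HJ (fun s => mmul (P s) (madj (Q s)))).
      { intros s Hs. unfold g. rewrite minv_adj; auto. }
      apply msmooth_mmul; auto. apply msmooth_madj; auto.
    + intros t Ht. split; [|split].
      * unfold in_AdS. fold (g t). rewrite G0, mdet_Xs, HPd, HQd by auto.
        unfold mdet; simpl; ring.
      * fold g. rewrite G1 by auto. intros E. rewrite <- (Xs_zero (P t) (Q t)) in E.
        apply Xs_inj in E; auto. apply (f_equal m12) in E. simpl in E. lra.
      * fold g. rewrite G1, ip_self, mdet_Xs, HPd, HQd by auto. unfold mdet; simpl; ring.
    + intros t Ht. fold g. rewrite G0, G1 by auto. apply fut_ineq; auto.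
    + intros t Ht x y E. fold g in E. rewrite G1, G2 in E by auto.
        rewrite !Xs_scal, Xs_add, <- (Xs_zero (P t) (Q t)) in E.
        apply Xs_inj in E; auto.
        pose proof (f_equal m11 E) as E1. pose proof (f_equal m12 E) as E2.
        simpl in E1, E2. lra.
    + intros t Ht. fold g. rewrite G2, ip_self, mdet_Xs, HPd, HQd by auto.
        unfold mdet; simpl; ring.
  - exact BE.
  - split; [auto|split; [auto|]].
    intros t Ht. split; [apply HPd; auto|split; [apply HQd; auto|split; [reflexivity|]]].
    fold g. rewrite !Xs_minv by auto. split; [|split].
    + unfold Tvec. rewrite G1, Xs_scal by auto. f_equal. unfold P2, mscal; apply mat_eq; simpl; rewrite ?inv_s2; field.
    + unfold Nvec. rewrite G2, Xs_scal by auto. f_equal. unfold P3, mscal; apply mat_eq; simpl; field.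
    + unfold Bvec. rewrite BE, G1, G3 by auto. rewrite !Xs_scal, Xs_add. f_equal.
      unfold P4, mscal, madd; apply mat_eq; simpl; rewrite ?Rinv_mult, ?inv_s2; field.
Qed.
Theorem mainTheorem1 (a b : Rbar) (Hab : Rbar_lt a b) :
  (forall g Fp Fm : R -> Mat2,
     std_null_curve (in_interval a b) g ->
     spinor_frame (in_interval a b) g Fp Fm ->
     star_shaped (in_interval a b) (fun t => col1 (Fp t)) /\
     star_shaped (in_interval a b) (fun t => col1 (Fm t)) /\
     ca_arclength (in_interval a b) (fun t => col1 (Fp t)) /\
     ca_arclength (in_interval a b) (fun t => col1 (Fm t)) /\
     (forall t, in_interval a b t ->
        ca_frame (fun s => col1 (Fp s)) t = Fp t /\
        ca_frame (fun s => col1 (Fm s)) t = Fm t /\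
        ca_curv (fun s => col1 (Fp s)) t = bending g t + 1 /\
        ca_curv (fun s => col1 (Fm s)) t = bending g t - 1) /\
     cousins (in_interval a b) (fun t => col1 (Fp t)) (fun t => col1 (Fm t)))
  /\
  (forall etap etam : R -> R * R,
     cousins (in_interval a b) etap etam ->
     std_null_curve (in_interval a b)
       (fun t => mmul (ca_frame etap t) (minv (ca_frame etam t))) /\
     (forall t, in_interval a b t ->
        bending (fun s => mmul (ca_frame etap s) (minv (ca_frame etam s))) t
        = (ca_curv etap t + ca_curv etam t) / 2) /\
     spinor_frame (in_interval a b)
       (fun t => mmul (ca_frame etap t) (minv (ca_frame etam t)))
       (ca_frame etap) (ca_frame etam)).
Proof.
  pose proof (interval_open a b) as HJ.
  split.
  - intros g Fp Fm Hg Hs.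
    pose proof (fwd_frame _ HJ g Fp Fm Hg Hs) as Hd.
    destruct Hs as (HPs & HQs & HF).
    destruct (frame_curve _ HJ Fp (fun s => bending g s + 1) HPs) as (SP & AP & FP).
    { intros s H. apply (HF s H). }
    { intros s H. apply (Hd s H). }
    destruct (frame_curve _ HJ Fm (fun s => bending g s - 1) HQs) as (SQ & AQ & FQ).
    { intros s H. apply (HF s H). }
    { intros s H. apply (Hd s H). }
    split; [exact SP|split; [exact SQ|split; [exact AP|split; [exact AQ|split]]]].
    + intros t Ht. destruct (FP t Ht), (FQ t Ht). repeat split; auto.
    + repeat split; try apply SP; try apply SQ; auto.
      intros t Ht. destruct (FP t Ht) as [_ ->], (FQ t Ht) as [_ ->]. field.
  - intros etap etam Hc. apply (conv_main _ HJ etap etam Hc).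
Qed.
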